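(* Let $K\subset\mathbb{R}^n$ be a nonempty compact convex set and let $\{\mathbb{A}_m\}_{m\in\mathbb{N}}$ be a sequence of isometries of $\mathbb{R}^n$. Suppose that the sequence \[K_m=\frac{1}{m}\sum_{j=1}^m \mathbb{A}_j K\] converges in the Hausdorff metric. Then for every nonempty compact set $C\subset\mathbb{R}^n$ with $\mathrm{conv}(C)=K$, the sequence \[C_m=\frac{1}{m}\sum_{j=1}^m \mathbb{A}_j C\] also converges in the Hausdorff metric, and its limit coincides with the limit of $\{K_m\}$.
   Context: For sets $X,Y\subset\mathbb{R}^n$ and $t\ge 0$, $X+Y=\{x+y:x\in X,y\in Y\}$ is the Minkowski sum and $tX=\{tx:x\in X\}$; $\sum_{j=1}^m X_j$ denotes iterated Minkowski sum. $\mathrm{conv}(C)$ is the convex hull of $C$. The Hausdorff distance between sets $A,B$ is $d_H(A,B)=\max\{\sup_{x\in B}d(x,A),\sup_{x\in A}d(x,B)\}$. *)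

(* Defs.v *)
From HB Require Import structures.
From mathcomp Require Import all_boot all_order all_algebra.
From mathcomp Require Import all_classical all_reals all_analysis.
Set Implicit Arguments. Unset Strict Implicit. Unset Printing Implicit Defensive.
Import Order.TTheory GRing.Theory Num.Theory.
Import numFieldNormedType.Exports.
Local Open Scope classical_set_scope.
Local Open Scope ring_scope.

Section Defs.
Variables (R : realType) (n : nat).
Local Notation V := 'rV[R]_n.

Definition edist (x y : V) : R :=
  Num.sqrt (\sum_(i < n) (x ord0 i - y ord0 i) ^+ 2).

Definition is_isometry (f : V -> V) : Prop :=
  forall x y, edist (f x) (f y) = edist x y.

Definition msum (X Y : set V) : set V := [set x + y | x in X & y in Y].
Definition mscale (t : R) (X : set V) : set V := [set t *: x | x in X].

(* msumn F m = F 1 + ... + F m  (Minkowski), with msumn F 0 = {0} *)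
Fixpoint msumn (F : nat -> set V) (m : nat) : set V :=
  match m with
  | 0 => [set 0]
  | k.+1 => msum (msumn F k) (F k.+1)
  end.

Definition convex_set_ (S : set V) : Prop :=
  forall x y t, S x -> S y -> 0 <= t -> t <= 1 -> S ((1 - t) *: x + t *: y).
Definition chull (C : set V) : set V :=
  \bigcap_(S in [set S | convex_set_ S /\ C `<=` S]) S.

Definition pdist (x : V) (A : set V) : R := inf [set edist x y | y in A].
Definition hausdorff (A B : set V) : R :=
  Num.max (sup [set pdist x A | x in B]) (sup [set pdist x B | x in A]).

Definition hconv (S : nat -> set V) (L : set V) : Prop :=
  (fun m => hausdorff (S m) L) @ \oo --> (0 : R^o).

Definition avg_sum (A : nat -> V -> V) (X : set V) (m : nat) : set V :=
  mscale (m%:R)^-1 (msumn (fun j => A j @` X) m).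
End Defs.

(* Main.v *)
Require Import Defs.
From HB Require Import structures.
From mathcomp Require Import all_boot all_order all_algebra.
From mathcomp Require Import all_classical all_reals all_analysis.
From mathcomp Require Import ring lra.
Import Order.TTheory GRing.Theory Num.Theory.
Import numFieldNormedType.Exports.
Local Open Scope classical_set_scope.
Local Open Scope ring_scope.
Set Implicit Arguments. Unset Strict Implicit. Unset Printing Implicit Defensive.

Section Aux.
Variables (R : realType) (n : nat).
Local Notation V := 'rV[R]_n.

Definition dot (x y : V) : R := \sum_(i < n) x ord0 i * y ord0 i.
Definition nrm2 (x : V) : R := dot x x.

Lemma edistE (x y : V) : Defs.edist x y = Num.sqrt (nrm2 (x - y)).
Proof.
rewrite /Defs.edist /nrm2 /dot; congr Num.sqrt; apply: eq_bigr => i _.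
by rewrite !mxE expr2.
Qed.

Lemma dotC x y : dot x y = dot y x.
Proof. by apply: eq_bigr => i _; rewrite mulrC. Qed.

Lemma dotDl x y z : dot (x + y) z = dot x z + dot y z.
Proof. by rewrite /dot -big_split; apply: eq_bigr => i _; rewrite !mxE mulrDl. Qed.

Lemma dotNl x z : dot (- x) z = - dot x z.
Proof. by rewrite /dot -sumrN; apply: eq_bigr => i _; rewrite !mxE mulNr. Qed.

Lemma dotBl x y z : dot (x - y) z = dot x z - dot y z.
Proof. by rewrite dotDl dotNl. Qed.

Lemma dotZl a x z : dot (a *: x) z = a * dot x z.
Proof. by rewrite /dot mulr_sumr; apply: eq_bigr => i _; rewrite !mxE mulrA. Qed.

Lemma dotDr x y z : dot z (x + y) = dot z x + dot z y.
Proof. by rewrite dotC dotDl !(dotC z). Qed.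
Lemma dotBr x y z : dot z (x - y) = dot z x - dot z y.
Proof. by rewrite dotC dotBl !(dotC z). Qed.
Lemma dotZr a x z : dot z (a *: x) = a * dot z x.
Proof. by rewrite dotC dotZl dotC. Qed.

Lemma dot_suml (I : Type) (r : seq I) (P : pred I) (F : I -> V) z :
  dot (\sum_(i <- r | P i) F i) z = \sum_(i <- r | P i) dot (F i) z.
Proof.
rewrite /dot (exchange_big); apply: eq_bigr => j _.
by rewrite summxE mulr_suml.
Qed.

Lemma dot_sumr (I : Type) (r : seq I) (P : pred I) (F : I -> V) z :
  dot z (\sum_(i <- r | P i) F i) = \sum_(i <- r | P i) dot z (F i).
Proof. by rewrite dotC dot_suml; apply: eq_bigr => i _; rewrite dotC. Qed.

Lemma dot0l z : dot 0 z = 0.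
Proof. by rewrite /dot big1 // => i _; rewrite mxE mul0r. Qed.

Lemma nrm2_ge0 x : 0 <= nrm2 x.
Proof. by apply: sumr_ge0 => i _; rewrite -expr2 sqr_ge0. Qed.

Lemma nrm2_eq0 x : nrm2 x = 0 -> x = 0.
Proof.
move=> h; apply/rowP => i; rewrite mxE.
have := psumr_eq0P (fun i _ => sqr_ge0 (x ord0 i)) _ (isT : predT i).
rewrite /nrm2 /dot in h.
have h' : \sum_(i < n) x ord0 i ^+ 2 = 0 by rewrite -[RHS]h; apply: eq_bigr => j _; rewrite expr2.
by move=> /(_ h') /eqP; rewrite sqrf_eq0 => /eqP.
Qed.

Lemma nrm2D x y : nrm2 (x + y) = nrm2 x + 2 * dot x y + nrm2 y.
Proof. rewrite /nrm2 !dotDl !dotDr (dotC y x); ring. Qed.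
Lemma nrm2B x y : nrm2 (x - y) = nrm2 x - 2 * dot x y + nrm2 y.
Proof. rewrite /nrm2 !dotBl !dotBr (dotC y x); ring. Qed.
Lemma nrm2Z a x : nrm2 (a *: x) = a ^+ 2 * nrm2 x.
Proof. by rewrite /nrm2 dotZl dotZr mulrA expr2. Qed.
Lemma nrm2N x : nrm2 (- x) = nrm2 x.
Proof. by rewrite /nrm2 dotNl dotC dotNl opprK. Qed.

Lemma coord_le (x : V) (i : 'I_n) : `|x ord0 i| <= Num.sqrt (nrm2 x).
Proof.
rewrite -sqrtr_sqr ler_sqrt ?nrm2_ge0 // /nrm2 /dot (bigD1 i) //= -expr2.
by rewrite lerDl sumr_ge0 // => j _; rewrite -expr2 sqr_ge0.
Qed.

Lemma cauchy_schwarz x y : dot x y ^+ 2 <= nrm2 x * nrm2 y.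
Proof.
have [/nrm2_eq0 ->|hy] := eqVneq (nrm2 y) 0.
  by rewrite dotC dot0l /nrm2 dot0l expr2 !mulr0.
have hy0 : 0 < nrm2 y by rewrite lt0r hy nrm2_ge0.
pose t := dot x y / nrm2 y.
have := nrm2_ge0 (x - t *: y).
rewrite nrm2B nrm2Z dotZr /t => h.
have e : nrm2 x - 2 * (dot x y / nrm2 y * dot x y) +
   (dot x y / nrm2 y) ^+ 2 * nrm2 y = (nrm2 x * nrm2 y - dot x y ^+ 2) / nrm2 y.
  by field; rewrite hy.
rewrite e pmulr_lge0 ?invr_gt0 // subr_ge0 in h.
exact: h.
Qed.

Lemma dot_le x y : dot x y <= Num.sqrt (nrm2 x) * Num.sqrt (nrm2 y).
Proof.
rewrite -sqrtrM ?nrm2_ge0 //; apply: le_trans (ler_norm _) _.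
by rewrite -sqrtr_sqr ler_sqrt ?cauchy_schwarz // mulr_ge0 // nrm2_ge0.
Qed.

Lemma sqrt_nrm2D x y : Num.sqrt (nrm2 (x + y)) <= Num.sqrt (nrm2 x) + Num.sqrt (nrm2 y).
Proof.
rewrite -(ger0_norm (addr_ge0 (sqrtr_ge0 (nrm2 x)) (sqrtr_ge0 (nrm2 y)))).
rewrite -sqrtr_sqr ler_sqrt ?sqr_ge0 // sqrrD !sqr_sqrtr ?nrm2_ge0 // nrm2D.
have := dot_le x y; set a := Num.sqrt _ * _ => h.
rewrite -mulr_natr -(mulr_natr a); lra.
Qed.

Lemma edist_triangle (x y z : V) : Defs.edist x z <= Defs.edist x y + Defs.edist y z.
Proof.
rewrite !edistE; have -> : x - z = (x - y) + (y - z) by rewrite addrA subrK.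
exact: sqrt_nrm2D.
Qed.

Lemma edist_ge0 (x y : V) : 0 <= Defs.edist x y.
Proof. by rewrite edistE sqrtr_ge0. Qed.

Lemma edistC (x y : V) : Defs.edist x y = Defs.edist y x.
Proof. by rewrite !edistE -opprB nrm2N. Qed.

End Aux.

Section Aux2.
Variables (R : realType) (n : nat).
Local Notation V := 'rV[R]_n.

Lemma edist_nrm2 (x y x' y' : V) : Defs.edist x y = Defs.edist x' y' ->
  nrm2 (x - y) = nrm2 (x' - y').
Proof.
rewrite !edistE => h.
by rewrite -(sqr_sqrtr (nrm2_ge0 (x - y))) h sqr_sqrtr // nrm2_ge0.
Qed.

Lemma nrm2_sum k (l : nat -> R) (w : nat -> V) :
  nrm2 (\sum_(0 <= i < k) l i *: w i) =
  \sum_(0 <= i < k) \sum_(0 <= j < k) l i * l j * dot (w i) (w j).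
Proof.
rewrite /nrm2 dot_suml; apply: eq_bigr => i _.
rewrite dotZl dot_sumr mulr_sumr; apply: eq_bigr => j _.
by rewrite dotZr mulrA.
Qed.

Lemma iso_aff (f : V -> V) (hf : is_isometry f) k (c : nat -> V) (l : nat -> R) :
  \sum_(0 <= i < k) l i = 1 ->
  f (\sum_(0 <= i < k) l i *: c i) = \sum_(0 <= i < k) l i *: f (c i).
Proof.
move=> hl; set p := \sum_(0 <= i < k) l i *: c i.
pose u i := f (c i) - f p; pose v i := c i - p.
have hn i : nrm2 (u i) = nrm2 (v i) by apply: edist_nrm2; apply: hf.
have hd i j : dot (u i) (u j) = dot (v i) (v j).
  have e1 : nrm2 (u i - u j) = nrm2 (v i - v j).
    have -> : u i - u j = f (c i) - f (c j) by rewrite /u opprB addrA subrK.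
    have -> : v i - v j = c i - c j by rewrite /v opprB addrA subrK.
    by apply: edist_nrm2; apply: hf.
  move: e1; rewrite (nrm2B (u i)) (nrm2B (v i)) !hn => e1.
  have : 2 * dot (u i) (u j) = 2 * dot (v i) (v j) by lra.
  by move/(mulfI (_ : (2%:R : R) != 0)); apply; rewrite pnatr_eq0.
have hv : \sum_(0 <= i < k) l i *: v i = 0.
  rewrite /v (eq_bigr (fun i => l i *: c i - l i *: p)); last by move=> i _; rewrite scalerBr.
  by rewrite sumrB -scaler_suml hl scale1r subrr.
have hu : nrm2 (\sum_(0 <= i < k) l i *: u i) = 0.
  rewrite nrm2_sum -[RHS](_ : nrm2 (\sum_(0 <= i < k) l i *: v i) = 0).
    by rewrite nrm2_sum; apply: eq_bigr => i _; apply: eq_bigr => j _; rewrite hd.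
  by rewrite hv /nrm2 dot0l.
move/nrm2_eq0: hu; rewrite /u.
rewrite (eq_bigr (fun i => l i *: f (c i) - l i *: f p)); last by move=> i _; rewrite scalerBr.
by rewrite sumrB -scaler_suml hl scale1r => /eqP; rewrite subr_eq0 => /eqP.
Qed.

Lemma sum_cat (T : nmodType) k1 k2 (F : nat -> T) :
  \sum_(0 <= i < k1 + k2) F i = \sum_(0 <= i < k1) F i + \sum_(0 <= i < k2) F (i + k1)%N.
Proof.
rewrite (@big_cat_nat _ _ _ k1 0 (k1 + k2)) ?leq_addr //=.
have -> : \sum_(k1 <= i < k1 + k2) F i = \sum_(0 <= i < k2) F (i + k1)%N.
  by rewrite -{1}(add0n k1) big_addn addKn.
by [].
Qed.

Definition cc (C : set V) (x : V) := exists k (c : nat -> V) (l : nat -> R),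
  (forall i, (i < k)%N -> C (c i) /\ 0 <= l i) /\
  \sum_(0 <= i < k) l i = 1 /\ x = \sum_(0 <= i < k) l i *: c i.

Lemma cc_convex (C : set V) : convex_set_ (cc C).
Proof.
move=> x y t [k1 [c1 [l1 [h1 [s1 ->]]]]] [k2 [c2 [l2 [h2 [s2 ->]]]]] t0 t1.
pose c i := if (i < k1)%N then c1 i else c2 (i - k1)%N.
pose l i := if (i < k1)%N then (1 - t) * l1 i else t * l2 (i - k1)%N.
have e1 (T : nmodType) (F : nat -> T) (G : nat -> T) :
  (forall i, (i < k1)%N -> F i = G i) ->
  \sum_(0 <= i < k1) F i = \sum_(0 <= i < k1) G i.
  by move=> h; apply: eq_big_nat => i /andP[_ /h].
have sh i : (i + k1 < k1)%N = false by rewrite ltnNge leq_addl.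
exists (k1 + k2)%N, c, l; split; [|split].
- move=> i hi; rewrite /c /l; case: ifP => hik.
    by have [? ?] := h1 i hik; split => //; apply: mulr_ge0 => //; lra.
  have hik2 : (i - k1 < k2)%N by rewrite ltn_subLR // leqNgt hik.
  by have [? ?] := h2 _ hik2; split => //; apply: mulr_ge0.
- rewrite sum_cat (e1 _ _ (fun i => (1 - t) * l1 i)); last by move=> i hi; rewrite /l hi.
  rewrite [X in _ + X](eq_bigr (fun i => t * l2 i)); last by move=> i _; rewrite /l sh addnK.
  by rewrite -!mulr_sumr s1 s2 !mulr1 subrK.
- rewrite [RHS]sum_cat [X in _ = X + _](e1 _ _ (fun i => ((1 - t) * l1 i) *: c1 i)); last by move=> i hi; rewrite /l /c hi.
  rewrite [X in _ = _ + X](eq_bigr (fun i => (t * l2 i) *: c2 i)); last by move=> i _; rewrite /l /c sh addnK.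
  by rewrite !scaler_sumr; congr (_ + _); apply: eq_bigr => i _; rewrite scalerA.
Qed.

Lemma chull_cc (C : set V) : chull C `<=` cc C.
Proof.
move=> x hx; apply: hx; split; first exact: cc_convex.
move=> y Cy; exists 1%N, (fun _ => y), (fun _ => 1); split; [|split].
- by move=> i _; split.
- by rewrite big_nat1.
- by rewrite big_nat1 scale1r.
Qed.

Lemma sub_chull (C : set V) : C `<=` chull C.
Proof. by move=> x Cx S [_ /(_ x Cx)]. Qed.

End Aux2.

Section Aux3.
Variables (R : realType) (n : nat).
Local Notation V := 'rV[R]_n.

Lemma exists_le_avg k (l v : nat -> R) :
  (forall i, (i < k)%N -> 0 <= l i) -> \sum_(0 <= i < k) l i = 1 ->
  exists i, (i < k)%N /\ v i <= \sum_(0 <= j < k) l j * v j.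
Proof.
move=> hl0 hl1; set B := \sum_(0 <= j < k) l j * v j.
apply/not_existsP => hn.
have hv i : (i < k)%N -> B < v i.
  move=> hi; rewrite ltNge; apply/negP => hle; apply: (hn i); split => //.
have hl0' i : i \in index_iota 0 k -> 0 <= l i by rewrite mem_index_iota => /hl0.
have hpos : \sum_(0 <= i < k) l i * (v i - B) = 0.
  apply/eqP; rewrite eq_le; apply/andP; split.
    rewrite (eq_bigr (fun i => l i * v i - l i * B)); last by move=> i _; rewrite mulrBr.
    by rewrite sumrB -mulr_suml hl1 mul1r /B subrr.
  rewrite big_seq_cond; apply: sumr_ge0 => i /andP[hi _]; apply: mulr_ge0; first exact: hl0'.
  by rewrite subr_ge0 ltW // hv //; rewrite mem_index_iota in hi.
have : \sum_(i <- index_iota 0 k | i \in index_iota 0 k) l i != 0.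
  by rewrite -big_seq hl1 oner_neq0.
rewrite psumr_neq0; last by move=> i /hl0'.
case/hasP => i hi /andP[_ li0].
move/eqP: hpos; rewrite big_seq_cond psumr_eq0; last first.
  move=> i' /andP[hi' _]; apply: mulr_ge0; first exact: hl0'.
  by rewrite subr_ge0 ltW // hv //; rewrite mem_index_iota in hi'.
move/allP/(_ i hi); rewrite hi /= mulf_eq0 subr_eq0 => /orP[/eqP h|/eqP h].
  by move: li0; rewrite h ltxx.
suff : B < v i by rewrite h ltxx.
by apply: hv; rewrite mem_index_iota in hi.
Qed.

Lemma greedy (A : nat -> V -> V) (hA : forall m, is_isometry (A m)) (K C : set V) D :
  K `<=` cc C -> C `<=` K -> (forall x y, K x -> K y -> nrm2 (x - y) <= D) ->
  forall m s, msumn (fun j => A j @` K) m s ->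
  exists t, msumn (fun j => A j @` C) m t /\ nrm2 (s - t) <= m%:R * D.
Proof.
move=> hKC hCK hD; elim=> [|m IH] s /=.
  by move=> ->; exists 0; split => //; rewrite subrr /nrm2 dot0l mul0r.
case=> s' hs' [y [k Kk <-] <-].
have [t' [ht' hb]] := IH s' hs'.
have := hKC _ Kk; case=> [kk [c [l [hcl [hl ek]]]]].
set f := A m.+1; set w := s' - t'.
have hl0 i : (i < kk)%N -> 0 <= l i by move=> /hcl[].
have [i [hi hle]] := exists_le_avg (fun i => nrm2 (w + (f k - f (c i)))) hl0 hl.
have hsum : \sum_(0 <= j < kk) l j *: (f k - f (c j)) = 0.
  rewrite (eq_bigr (fun j => l j *: f k - l j *: f (c j))); last by move=> j _; rewrite scalerBr.
  rewrite sumrB -scaler_suml hl scale1r ek -iso_aff //; last exact: hA.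
  by apply/eqP; rewrite subr_eq0.
have hexp : \sum_(0 <= j < kk) l j * nrm2 (w + (f k - f (c j))) =
   nrm2 w + \sum_(0 <= j < kk) l j * nrm2 (f k - f (c j)).
  rewrite (eq_bigr (fun j => l j * nrm2 w + (2 * dot w (l j *: (f k - f (c j)))
           + l j * nrm2 (f k - f (c j))))); last first.
    by move=> j _; rewrite nrm2D dotZr; ring.
  rewrite big_split big_split /= -mulr_suml hl mul1r -mulr_sumr -dot_sumr hsum.
  by rewrite dotC dot0l mulr0 add0r.
have hD' : \sum_(0 <= j < kk) l j * nrm2 (f k - f (c j)) <= D.
  rewrite -[D]mul1r -hl mulr_suml big_seq_cond [X in _ <= X]big_seq_cond.
  apply: ler_sum => j /andP[hj _]; rewrite mem_index_iota in hj.
  apply: ler_wpM2l; first exact: hl0.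
  rewrite (edist_nrm2 (hA m.+1 k (c j))).
  by apply: hD => //; apply: hCK; have [] := hcl j hj.
exists (t' + f (c i)); split.
  by exists t' => //; exists (f (c i)) => //; exists (c i) => //; have [] := hcl i hi.
have -> : s' + f k - (t' + f (c i)) = w + (f k - f (c i)).
  by rewrite /w opprD addrACA.
apply: (le_trans hle); rewrite hexp -natr1 mulrDl mul1r.
by apply: lerD.
Qed.

Definition ebnd (S : set V) := exists M, forall x, S x -> Num.sqrt (nrm2 x) <= M.

Lemma ebnd_msum S T : ebnd S -> ebnd T -> ebnd (Defs.msum S T).
Proof.
move=> [M1 h1] [M2 h2]; exists (M1 + M2) => _ [x Sx [y Ty <-]].
by apply: le_trans (sqrt_nrm2D _ _) _; apply: lerD; auto.
Qed.

Lemma ebnd_mscale t S : ebnd S -> ebnd (Defs.mscale t S).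
Proof.
move=> [M h]; exists (`|t| * M) => _ [x Sx <-].
rewrite nrm2Z sqrtrM ?sqr_ge0 // sqrtr_sqr; apply: ler_wpM2l => //; exact: h.
Qed.

Lemma ebnd_iso (f : V -> V) S : is_isometry f -> ebnd S -> ebnd (f @` S).
Proof.
move=> hf [M h]; have [[x0 Sx0]|S0] := pselect (S !=set0); last first.
  by exists 0 => y [x Sx _]; exfalso; apply: S0; exists x.
exists (M + M + Num.sqrt (nrm2 (f x0))) => _ [x Sx <-].
have -> : f x = (f x - f x0) + f x0 by rewrite subrK.
apply: le_trans (sqrt_nrm2D _ _) _; apply: lerD => //.
rewrite -edistE hf edistE; apply: le_trans (sqrt_nrm2D _ _) _.
by rewrite nrm2N; apply: lerD; auto.
Qed.

Lemma ebnd_msumn (F : nat -> set V) m : (forall j, ebnd (F j)) -> ebnd (msumn F m).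
Proof.
move=> hF; elim: m => [|m IH] /=.
  by exists 0 => x ->; rewrite /nrm2 dot0l sqrtr0.
exact: ebnd_msum.
Qed.

Lemma msumn_neq0 (F : nat -> set V) m : (forall j, F j !=set0) -> msumn F m !=set0.
Proof.
move=> hF; elim: m => [|m [s hs]] /=; first by exists 0.
have [y hy] := hF m.+1; exists (s + y); by exists s => //; exists y.
Qed.

Lemma msumn_sub (F G : nat -> set V) m : (forall j, F j `<=` G j) -> msumn F m `<=` msumn G m.
Proof.
move=> hFG; elim: m => [|m IH] //= _ [x hx [y hy <-]].
by exists x; [exact: IH|exists y => //; exact: hFG].
Qed.

Lemma compact_ebnd (K : set V) : compact K -> ebnd K.
Proof.
move=> /compact_bounded [M [_ HM]]; exists (Num.sqrt (n%:R * (M + 1) ^+ 2)) => x Kx.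
have hx : `|x| <= M + 1 by apply: HM => //; rewrite ltrDl.
rewrite ler_sqrt; last by apply: mulr_ge0 => //; rewrite sqr_ge0.
have -> : n%:R * (M + 1) ^+ 2 = \sum_(i < n) (M + 1) ^+ 2 by rewrite sumr_const card_ord mulr_natl.
apply: ler_sum => i _; rewrite -expr2 -real_normK ?num_real //.
have hc : `|x ord0 i| <= `|x|.
  have -> : `|x| = mx_norm x by [].
  rewrite mx_normrE; exact: (le_bigmax _ (fun ij : 'I_1 * 'I_n => `|x ij.1 ij.2|) (ord0, i)).
have h0 : 0 <= `|x ord0 i| by [].
rewrite !expr2; apply: ler_pM => //; exact: le_trans hc hx.
Qed.

End Aux3.

Section Aux4.
Variables (R : realType) (n : nat).
Local Notation V := 'rV[R]_n.

Lemma pdist_ge0 (x : V) X : X !=set0 -> 0 <= pdist x X.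
Proof.
move=> [y Xy]; apply: lb_le_inf; first by exists (Defs.edist x y), y.
by move=> _ [z _ <-]; exact: edist_ge0.
Qed.

Lemma pdist_le (x : V) X y : X y -> pdist x X <= Defs.edist x y.
Proof.
move=> Xy; apply: ge_inf; last by exists y.
by exists 0 => _ [z _ <-]; exact: edist_ge0.
Qed.

Lemma edist_bnd (x y : V) M M' : Num.sqrt (nrm2 x) <= M -> Num.sqrt (nrm2 y) <= M' ->
  Defs.edist x y <= M + M'.
Proof.
move=> hx hy; rewrite edistE; apply: le_trans (sqrt_nrm2D _ _) _.
by rewrite nrm2N; apply: lerD.
Qed.

Lemma pdist_ub (X Y : set V) : X !=set0 -> ebnd X -> ebnd Y -> has_ubound [set pdist x X | x in Y].
Proof.
move=> [x0 Xx0] [MX hX] [MY hY]; exists (MY + MX) => _ [y Yy <-].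
apply: le_trans (pdist_le _ Xx0) _; apply: edist_bnd; auto.
Qed.

Lemma haus_le (S T L : set V) eps :
  S !=set0 -> S `<=` T -> ebnd T -> L !=set0 -> ebnd L -> 0 <= eps ->
  (forall t, T t -> exists2 s, S s & Defs.edist t s <= eps) ->
  0 <= hausdorff S L /\ hausdorff S L <= hausdorff T L + eps.
Proof.
move=> [s0 Ss0] ST bT L0 bL eps0 happ.
have T0 : T !=set0 by exists s0; apply: ST.
have ubT : has_ubound [set pdist x L | x in T] by apply: pdist_ub.
have ubTL : has_ubound [set pdist x T | x in L] by apply: pdist_ub.
have supT x : T x -> pdist x L <= sup [set pdist x L | x in T].
  move=> Tx; apply: sup_upper_bound; first by split => //; exists (pdist x L), x.
  by exists x.
have supTL x : L x -> pdist x T <= sup [set pdist x T | x in L].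
  move=> Lx; apply: sup_upper_bound; first by split => //; case: L0 => y Ly; exists (pdist y T), y.
  by exists x.
have hb0 : 0 <= sup [set pdist x L | x in S].
  apply: le_trans (pdist_ge0 s0 L0) _; apply: sup_upper_bound; last by exists s0.
  split; first by exists (pdist s0 L), s0.
  by case: ubT => M hM; exists M => _ [x Sx <-]; apply: hM; exists x => //; apply: ST.
have hb : sup [set pdist x L | x in S] <= sup [set pdist x L | x in T].
  apply: ge_sup; first by exists (pdist s0 L), s0.
  by move=> _ [x Sx <-]; apply: supT; apply: ST.
have ha : sup [set pdist x S | x in L] <= sup [set pdist x T | x in L] + eps.
  apply: ge_sup; first by case: L0 => y Ly; exists (pdist y S), y.
  move=> _ [x Lx <-]; apply: le_trans (lerD (supTL x Lx) (lexx eps)).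
  rewrite -lerBlDr; apply: lb_le_inf; first by case: T0 => t Tt; exists (Defs.edist x t), t.
  move=> _ [t Tt <-]; have [s Ss hts] := happ t Tt.
  rewrite lerBlDr; apply: le_trans (pdist_le x Ss) _.
  apply: le_trans (edist_triangle x t s) _; exact: lerD.
rewrite /hausdorff; split; first by rewrite le_max hb0 orbT.
rewrite ge_max; apply/andP; split.
  by apply: le_trans ha _; rewrite lerD2r le_max lexx.
apply: le_trans hb _; apply: le_trans (_ : _ <= Num.max (sup [set pdist x T | x in L])
     (sup [set pdist x L | x in T])) _; first by rewrite le_max lexx orbT.
by rewrite lerDl.
Qed.

End Aux4.

Unset Implicit Arguments.
Set Strict Implicit.

Theorem theorem2 (R : realType) (n : nat) (K : set 'rV[R]_n)
  (A : nat -> 'rV[R]_n -> 'rV[R]_n) :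
  K !=set0 -> compact K -> convex_set_ K ->
  (forall m, is_isometry (A m)) ->
  (exists L : set 'rV[R]_n, L !=set0 /\ compact L /\ hconv (avg_sum A K) L) ->
  forall C : set 'rV[R]_n, C !=set0 -> compact C -> chull C = K ->
  exists L : set 'rV[R]_n, L !=set0 /\ compact L /\
    hconv (avg_sum A K) L /\ hconv (avg_sum A C) L.
Proof.
move=> K0 cK convK hA [L [L0 [cL hL]]] C C0 cC hCK.
exists L; split => //; split => //; split => //.
have KC : K `<=` cc C by rewrite -hCK; exact: chull_cc.
have CK : C `<=` K by rewrite -hCK; exact: sub_chull.
have [MK hMK] := compact_ebnd cK.
set D := (MK + MK) ^+ 2.
have hD : forall x y, K x -> K y -> nrm2 (x - y) <= D.
  move=> x y Kx Ky; have h := edist_bnd (hMK x Kx) (hMK y Ky).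
  rewrite edistE in h.
  rewrite -(sqr_sqrtr (nrm2_ge0 (x - y))) /D !expr2.
  by apply: ler_pM => //; apply: sqrtr_ge0.
have D0 : 0 <= D by rewrite /D sqr_ge0.
have bL := compact_ebnd cL.
move: hL; rewrite /hconv => /cvgrPdist_lt hL.
apply/cvgrPdist_lt => e e0.
have e20 : 0 < e / 2 by rewrite divr_gt0.
have e40 : 0 < (e / 2) ^+ 2 by rewrite exprn_gt0.
have hL2 := hL _ e20.
near=> m.
have hm : (Num.bound (D / (e / 2) ^+ 2) < m)%N by near: m; exact: nbhs_infty_gt.
have hT : `|0 - hausdorff (avg_sum A K m) L| < e / 2 by near: m; exact: hL2.
have m0 : (0 < m)%N by apply: leq_ltn_trans hm.
have m0' : 0 < (m%:R : R) by rewrite ltr0n.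
set eps := Num.sqrt (D / m%:R).
have heps : eps < e / 2.
  rewrite /eps -[X in _ < X](@ger0_norm _ (e / 2)) ?ltW // -sqrtr_sqr ltr_sqrt //.
  rewrite ltr_pdivrMr // mulrC -ltr_pdivrMr //.
  apply: lt_le_trans (archi_boundP _) _; first by rewrite divr_ge0 // ltW.
  by rewrite ler_nat ltnW.
have hS0 : avg_sum A C m !=set0.
  have [y hy] := msumn_neq0 m (fun j => image_nonempty (A j) C0) .
  by exists ((m%:R)^-1 *: y), y.
have hST : avg_sum A C m `<=` avg_sum A K m.
  move=> _ [y hy <-]; exists y => //; apply: msumn_sub hy => j _ [x Cx <-].
  by exists x => //; apply: CK.
have bT : ebnd (avg_sum A K m).
  apply: ebnd_mscale; apply: ebnd_msumn => j; apply: ebnd_iso => //.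
  by exists MK.
have happ : forall t, avg_sum A K m t -> exists2 s, avg_sum A C m s & Defs.edist t s <= eps.
  move=> _ [s hs <-]; have [t [ht hst]] := greedy hA KC CK hD hs.
  exists ((m%:R)^-1 *: t); first by exists t.
  rewrite edistE -scalerBr nrm2Z /eps ler_sqrt; last by rewrite divr_ge0 // ltW.
  apply: le_trans (ler_wpM2l (sqr_ge0 _) hst) _.
  by rewrite (expr2 (m%:R^-1)) -!mulrA mulKf ?gt_eqF // /D expr2 mulrC -mulrA.
have [h0 hle] := haus_le hS0 hST bT L0 bL (sqrtr_ge0 _) happ.
rewrite sub0r normrN ger0_norm //.
rewrite sub0r normrN in hT.
apply: le_lt_trans hle _; rewrite [e]splitr; apply: ltrD => //.
exact: le_lt_trans (ler_norm _) hT.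
Unshelve. all: by end_near.
Qed.
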